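(* Let $G$ be a good finite group and let $N$ be a normal subgroup of $G$ with $N\cong\mathbb Z_2$. If $G/N$ possesses a complete mapping, then $G$ possesses a complete mapping.
   Context: A finite group is called good if its Sylow-2 subgroup is trivial or noncyclic (and bad if its Sylow-2 subgroup is nontrivial and cyclic). A complete mapping of a group $G$ is a bijection $\phi:G\to G$ such that $g\mapsto g\phi(g)$ is also a bijection of $G$; equivalently, there are an index set $I$ and bijections $a,b,c:I\to G$ with $a(i)b(i)=c(i)$ for all $i\in I$. *)

(* Defs.v *)
From mathcomp Require Import all_boot all_fingroup all_solvable.
Set Implicit Arguments. Unset Strict Implicit. Unset Printing Implicit Defensive.
Local Open Scope group_scope.

Definition good (gT : finGroupType) (G : {group gT}) : Prop :=
  forall P : {group gT}, P \in 'Syl_2(G) -> P :=: 1 \/ ~~ cyclic P.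

Definition complete_mapping (gT : finGroupType) (G : {set gT}) (phi : gT -> gT) : Prop :=
  [/\ {in G, forall x, phi x \in G}, {in G &, injective phi},
      {in G, forall x, x * phi x \in G} & {in G &, injective (fun x => x * phi x)}].

Definition has_complete_mapping (gT : finGroupType) (G : {set gT}) : Prop :=
  exists phi : gT -> gT, complete_mapping G phi.

(* Main.v *)
Require Import Defs.
From mathcomp Require Import all_boot all_fingroup all_solvable.
Set Implicit Arguments. Unset Strict Implicit. Unset Printing Implicit Defensive.
Set Implicit Arguments. Unset Strict Implicit. Unset Printing Implicit Defensive.

Section Coloring.
Variables (T : finType) (a b : T -> T).
Hypotheses (aK : involutive a) (bK : involutive b).
Hypotheses (na : forall x, a x != x) (nb : forall x, b x != x).

Let r x := b (a x).
Lemma r_inj : injective r.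
Proof. by move=> x y /(congr1 b); rewrite /r !bK => /(congr1 a); rewrite !aK. Qed.

Lemma iter_a x m : a x = iter m r x ->
  forall i, i <= m -> a (iter i r x) = iter (m - i) r x.
Proof.
move=> E; elim=> [|i IH] lti; first by rewrite subn0.
rewrite iterS /r IH ?(ltnW lti) //.
have -> : m - i = (m - i.+1).+1 by rewrite subnSK.
by rewrite iterS /r bK aK.
Qed.

Lemma not_conn x : ~~ fconnect r x (a x).
Proof.
apply/negP=> /iter_findex; set m := findex _ _ _ => E.
have := iter_a (esym E).
have [k Hk] : exists k, m = k.*2 + odd m.
  by exists m./2; rewrite -{1}(odd_double_half m) addnC.
case: (odd m) Hk => Hk.
- move/(_ k); rewrite Hk.
  have -> : k.*2 + true - k = k.+1 by rewrite -addnn /= addn1 -addnS addKn.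
  have lk : k <= k.*2 + true by rewrite -addnn -addnA leq_addr.
  move/(_ lk).
  rewrite iterS /r => Eq.
  by have := nb (a (iter k r x)); rewrite -Eq eqxx.
- move/(_ k); rewrite Hk addn0 -addnn addnK.
  move/(_ (leq_addr _ _)) => Eq.
  by have := na (iter k r x); rewrite Eq eqxx.
Qed.

Definition colK x := enum_rank (froot r x) < enum_rank (froot r (a x)).

Lemma rootne x : froot r x != froot r (a x).
Proof. by rewrite (root_connect (fconnect_sym r_inj)) not_conn. Qed.

Lemma colK_a x : colK (a x) = ~~ colK x.
Proof.
rewrite /colK aK ltnNge leq_eqVlt negb_or; have := rootne x.
by rewrite -(inj_eq enum_rank_inj) => ->.
Qed.

Lemma colK_b x : colK (b x) = ~~ colK x.
Proof.
rewrite -colK_a /colK.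
have -> : froot r (b x) = froot r (a x).
  apply/eqP; rewrite (root_connect (fconnect_sym r_inj)) (fconnect_sym r_inj).
  by have := fconnect1 r (a x); rewrite /r aK.
have -> : froot r (a (b x)) = froot r (a (a x)).
  apply/eqP; rewrite aK (root_connect (fconnect_sym r_inj)).
  by have := fconnect1 r (a (b x)); rewrite /r aK bK.
done.
Qed.

End Coloring.

Set Implicit Arguments. Unset Strict Implicit. Unset Printing Implicit Defensive.
Local Open Scope group_scope.

Section Main.
Variables (gT : finGroupType) (G N : {group gT}) (z : gT).
Hypotheses (nNG : N <| G) (zN : z \in N) (z1 : z != 1)
  (Nel : forall n, n \in N -> n = 1 \/ n = z).

Let nG : G \subset 'N(N) := normal_norm nNG.
Let sNG : N \subset G := normal_sub nNG.
Local Notation pi := (coset N).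
Local Notation Q := (G / N)%g.

Lemma zG : z \in G. Proof. exact: subsetP sNG z zN. Qed.

Lemma Ncent n g : n \in N -> g \in G -> n * g = g * n.
Proof.
move=> nN gG.
have : n ^ g \in N by rewrite memJ_norm // (subsetP nG).
case/Nel: (nN) => [-> | ->]; first by rewrite mul1g mulg1.
case/Nel => E.
  by move/eqP: E; rewrite conjg_eq1 (negbTE z1).
by move: E; rewrite conjgE => /(congr1 (mulg g)); rewrite mulKVg.
Qed.

Lemma zz : z * z = 1.
Proof.
have : z * z \in N by rewrite groupM.
case/Nel=> // E.
suff E1 : z = 1 by move: z1; rewrite E1 eqxx.
by apply: (mulgI z); rewrite E mulg1.
Qed.

Lemma Nsq n : n \in N -> n * n = 1.
Proof. by case/Nel=> ->; rewrite ?mulg1 ?zz. Qed.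

Lemma piM x y : x \in G -> y \in G -> pi (x * y) = pi x * pi y.
Proof. by move=> xG yG; rewrite morphM // (subsetP nG). Qed.

Lemma piV x : x \in G -> pi x^-1 = (pi x)^-1.
Proof. by move=> xG; rewrite morphV // (subsetP nG). Qed.

Lemma piN n : n \in N -> pi n = 1.
Proof. exact: coset_id. Qed.

Lemma piQ x : x \in G -> pi x \in Q.
Proof. exact: mem_quotient. Qed.

Lemma reprG (X : coset_of N) : X \in Q -> repr X \in G.
Proof.
case/morphimP=> x xN xG ->.
have := mem_repr_coset (pi x); rewrite val_coset //.
by case/rcosetP=> n nN ->; rewrite groupM // (subsetP sNG).
Qed.

Lemma reprK (X : coset_of N) : pi (repr X) = X.
Proof. exact: coset_reprK. Qed.

Lemma same_coset x y : x \in G -> y \in G -> pi x = pi y -> x = y \/ x = z * y.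
Proof.
move=> xG yG E.
have : x * y^-1 \in N.
  apply: coset_idr; first by rewrite (subsetP nG) // groupM ?groupV.
  by rewrite piM ?groupV // piV // E mulgV.
by case/Nel=> E2; [left | right]; rewrite -(mulgKV y x) E2 ?mul1g.
Qed.


Variables (phi : coset_of N -> coset_of N) (h : coset_of N) (H : gT).
Hypotheses (cm : complete_mapping Q phi) (hQ : h \in Q) (hh : h * h = 1)
  (h1 : h != 1) (HG : H \in G) (piH : pi H = h).

Let phiQ : {in Q, forall x, phi x \in Q}. Proof. by case: cm. Qed.
Let phiI : {in Q &, injective phi}. Proof. by case: cm. Qed.
Let thI : {in Q &, injective (fun x => x * phi x)}. Proof. by case: cm. Qed.

Definition th (X : coset_of N) : coset_of N := X * phi X.
Lemma thQ X : X \in Q -> th X \in Q.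
Proof. by move=> XQ; rewrite groupM ?phiQ. Qed.

Definition th' (X : coset_of N) : coset_of N := if X \in Q then th X else X.
Lemma th'_inj : injective th'.
Proof.
move=> X Y; rewrite /th'.
case XQ: (X \in Q); case YQ: (Y \in Q) => E.
- exact: thI.
- by move: YQ; rewrite -E thQ.
- by move: XQ; rewrite E thQ.
- done.
Qed.

Lemma hK (X : coset_of N) : h * (h * X) = X. Proof. by rewrite mulgA hh mul1g. Qed.

Definition al (X : coset_of N) : coset_of N := h * X.
Definition be (X : coset_of N) : coset_of N := invF th'_inj (h * th' X).

Lemma alK : involutive al. Proof. exact: hK. Qed.
Lemma beK : involutive be.
Proof. by move=> X; rewrite /be f_invF hK invF_f. Qed.
Lemma al_nf X : al X != X.
Proof.
apply/eqP=> E; move: h1; suff -> : h = 1 by rewrite eqxx.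
by apply: (mulIg X); rewrite mul1g.
Qed.
Lemma be_nf X : be X != X.
Proof.
apply/eqP=> E; move: h1; suff -> : h = 1 by rewrite eqxx.
apply: (mulIg (th' X)); rewrite mul1g -{2}E /be f_invF //.
Qed.

Definition K := colK al be.
Lemma K_a (X : coset_of N) : K (h * X) = ~~ K X.
Proof. exact: (colK_a alK beK al_nf be_nf). Qed.
Lemma K_b X Y : X \in Q -> Y \in Q -> th Y = h * th X -> K Y = ~~ K X.
Proof.
move=> XQ YQ E.
have -> : Y = be X.
  by apply: th'_inj; rewrite /be f_invF /th' XQ YQ E.
exact: (colK_b alK beK al_nf be_nf).
Qed.

Definition d := H * H.
Lemma dN : d \in N.
Proof.
apply: coset_idr; first by rewrite (subsetP nG) // groupM.
by rewrite /d piM // piH hh.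
Qed.

Lemma dinv : d^-1 = d.
Proof. by apply: (mulgI d); rewrite mulgV Nsq ?dN. Qed.

Definition R (X : coset_of N) : gT := if K X then repr X else H * repr (h * X : coset_of N).
Lemma RG X : X \in Q -> R X \in G.
Proof.
move=> XQ; rewrite /R; case: (K X); first exact: reprG.
by rewrite groupM // reprG // groupM.
Qed.
Lemma piR X : X \in Q -> pi (R X) = X.
Proof.
move=> XQ; rewrite /R; case: (K X); rewrite ?reprK //.
by rewrite piM ?reprG ?groupM // piH reprK hK.
Qed.
Lemma Rh X : X \in Q -> R (h * X) = if K X then H * R X else H^-1 * R X.
Proof. move=> XQ; rewrite /R K_a; case: (K X); [by rewrite hK | by rewrite mulKg]. Qed.

Definition mu X := if K (th X) then 1 else if K X then z * d else z.
Lemma muN X : mu X \in N.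
Proof. rewrite /mu; case: ifP => _; first exact: group1. by case: ifP => _; [exact: groupM zN dN | exact: zN]. Qed.
Lemma muG X : mu X \in G.
Proof. exact: (subsetP sNG _ (muN X)). Qed.

Definition c1 X := R (th X) * mu X.
Definition Phi1 X := (R X)^-1 * c1 X.

Lemma c1G X : X \in Q -> c1 X \in G.
Proof. by move=> XQ; rewrite groupM ?RG ?thQ ?muG. Qed.
Lemma pic1 X : X \in Q -> pi (c1 X) = th X.
Proof. by move=> XQ; rewrite piM ?RG ?thQ ?muG // piR ?thQ // piN ?muN // mulg1. Qed.
Lemma Phi1G X : X \in Q -> Phi1 X \in G.
Proof. by move=> XQ; rewrite groupM ?groupV ?RG ?c1G. Qed.
Lemma piPhi1 X : X \in Q -> pi (Phi1 X) = phi X.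
Proof.
by move=> XQ; rewrite piM ?groupV ?RG ?c1G // piV ?RG // piR // pic1 // mulKg.
Qed.

Lemma cross X Y : X \in Q -> Y \in Q -> th Y = h * th X ->
  c1 X != (if K (h * Y) then H^-1 else H) * c1 Y.
Proof.
move=> XQ YQ E; have KY := K_b XQ YQ E.
have WQ := thQ XQ.
rewrite K_a KY negbK /c1 /mu E Rh // K_a KY.
have RWG := RG WQ.
case: (K X); case: (K (th X)) => /=; apply/eqP => Eq.
- rewrite mulg1 -mulgA mulKg in Eq.
  by move: Eq; rewrite -{1}(mulg1 (R _)) => /mulgI E1; move: z1; rewrite -E1 eqxx.
-
 rewrite mulg1 [H^-1 * (_ * _)]mulgA -invMg -/d dinv (Ncent dN RWG) in Eq.
  move/mulgI: Eq; rewrite -{2}(mul1g d) => /mulIg E1.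
  by move: z1; rewrite E1 eqxx.
- rewrite mulg1 mulgA [H * (H * _)]mulgA -/d (Ncent dN RWG) -mulgA in Eq.
  move: Eq; rewrite -{1}(mulg1 (R _)) => /mulgI.
  rewrite -(Ncent dN zG) mulgA Nsq ?dN // mul1g => E1.
  by move: z1; rewrite -E1 eqxx.
- rewrite mulg1 mulKVg in Eq.
  by move: Eq; rewrite -{2}(mulg1 (R _)) => /mulgI E1; move: z1; rewrite E1 eqxx.
Qed.

Definition Phi (g : gT) : gT :=
  if g == R (pi g) then Phi1 (pi g) else z * Phi1 (h * pi g).

Lemma splitR g : g \in G -> g != R (pi g) -> g = z * R (pi g).
Proof.
move=> gG ne; have XQ := piQ gG.
case: (same_coset gG (RG XQ) (esym (piR XQ))) => E //.
by move: ne; rewrite {1}E eqxx.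
Qed.

Lemma PhiG g : g \in G -> Phi g \in G.
Proof.
move=> gG; have XQ := piQ gG; rewrite /Phi; case: eqP => _.
  exact: Phi1G.
by rewrite groupM ?zG ?Phi1G ?groupM.
Qed.

Lemma piPhi2 g : g \in G -> pi (z * Phi1 (h * pi g)) = phi (h * pi g).
Proof.
move=> gG; have hXQ : h * pi g \in Q by rewrite groupM ?piQ.
by rewrite piM ?zG ?Phi1G // piN // mul1g piPhi1.
Qed.

Lemma prod1 g : g = R (pi g) -> g * Phi g = c1 (pi g).
Proof. by move=> E; rewrite /Phi -E eqxx {1}E mulKVg. Qed.

Lemma prod2 g : g \in G -> g != R (pi g) ->
  g * Phi g = (if K (pi g) then H^-1 else H) * c1 (h * pi g).
Proof.
move=> gG ne; have XQ := piQ gG; have RXG := RG XQ.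
rewrite /Phi (negbTE ne) {1}(splitR gG ne) (Ncent zN RXG) -mulgA.
rewrite [z * (z * _)]mulgA zz mul1g /Phi1 Rh //.
case: (K (pi g)); rewrite invMg ?invgK !mulgA mulgV mul1g //.
Qed.

Lemma pirho X : pi (if K X then H^-1 else H) = h.
Proof.
case: (K X) => //; rewrite piV // piH.
by apply: (mulgI h); rewrite mulgV hh.
Qed.

Lemma piprod2 X : X \in Q ->
  pi ((if K X then H^-1 else H) * c1 (h * X)) = h * th (h * X).
Proof.
move=> XQ; have hXQ : h * X \in Q by rewrite groupM.
have rG : (if K X then H^-1 else H) \in G by case: (K X); rewrite ?groupV.
by rewrite piM ?c1G // pirho pic1.
Qed.

Lemma Phi_cross g g' : g \in G -> g' \in G -> g = R (pi g) -> g' != R (pi g') ->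
  Phi g != Phi g'.
Proof.
move=> gG g'G E ne; apply/eqP => Eq.
have XQ := piQ gG; have X'Q := piQ g'G; have hX'Q : h * pi g' \in Q by rewrite groupM.
move: (Eq); rewrite /Phi -E eqxx (negbTE ne) => Eq2.
have := congr1 pi Eq2; rewrite piPhi1 // -/(Phi1 _) piPhi2 // => /phiI.
move=> /(_ XQ hX'Q) EX.

move: Eq2; rewrite EX -{1}(mul1g (Phi1 _)) => /mulIg E1.
by move: z1; rewrite -E1 eqxx.
Qed.

Lemma prod_cross g g' : g \in G -> g' \in G -> g = R (pi g) -> g' != R (pi g') ->
  g * Phi g != g' * Phi g'.
Proof.
move=> gG g'G E ne; apply/eqP.
rewrite prod1 // prod2 // -{1}(hK (pi g')) => Eq.
have XQ := piQ gG; have X'Q := piQ g'G; have YQ : h * pi g' \in Q by rewrite groupM.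
have Eth : th (h * pi g') = h * th (pi g).
  have rG : (if K (h * (h * pi g')) then H^-1 else H) \in G.
    by case: (K _); rewrite ?groupV.
  move: (congr1 pi Eq); rewrite pic1 // piM ?c1G // pirho pic1 // => ->.
  by rewrite hK.
by move: (cross XQ YQ Eth); rewrite Eq eqxx.
Qed.

Lemma Phi_cm : complete_mapping G Phi.
Proof.
split.
- exact: PhiG.
- move=> g g' gG g'G Eq.
  have XQ := piQ gG; have X'Q := piQ g'G.
  case: (eqVneq g (R (pi g))) => Eg; case: (eqVneq g' (R (pi g'))) => Eg'.
  + move: Eq; rewrite /Phi -Eg -Eg' !eqxx => Eq.
    have := congr1 pi Eq; rewrite !piPhi1 // => /phiI => /(_ XQ X'Q) EX.
    by rewrite Eg Eg' EX.
  + by move: (Phi_cross gG g'G Eg Eg'); rewrite Eq eqxx.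
  + by move: (Phi_cross g'G gG Eg' Eg); rewrite Eq eqxx.
  + move: Eq; rewrite /Phi (negbTE Eg) (negbTE Eg') => Eq.
    have hXQ : h * pi g \in Q by rewrite groupM.
    have hX'Q : h * pi g' \in Q by rewrite groupM.
    have := congr1 pi Eq; rewrite !piPhi2 // => /phiI => /(_ hXQ hX'Q) /mulgI EX.
    by rewrite (splitR gG Eg) (splitR g'G Eg') EX.
- by move=> g gG; rewrite groupM ?PhiG.
- move=> g g' gG g'G /= Eq.
  have XQ := piQ gG; have X'Q := piQ g'G.
  case: (eqVneq g (R (pi g))) => Eg; case: (eqVneq g' (R (pi g'))) => Eg'.
  + move: Eq; rewrite !prod1 // => Eq.
    have := congr1 pi Eq; rewrite !pic1 // => /thI => /(_ XQ X'Q) EX.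
    by rewrite Eg Eg' EX.
  + by move: (prod_cross gG g'G Eg Eg'); rewrite Eq eqxx.
  + by move: (prod_cross g'G gG Eg' Eg); rewrite Eq eqxx.
  + move: Eq; rewrite !prod2 // => Eq.
    have hXQ : h * pi g \in Q by rewrite groupM.
    have hX'Q : h * pi g' \in Q by rewrite groupM.
    have rG b : (if b then H^-1 else H) \in G by case: b; rewrite ?groupV.
    have := congr1 pi Eq; rewrite !piprod2 // => /mulgI.
    move=> /thI => /(_ hXQ hX'Q) /mulgI EX.
    by rewrite (splitR gG Eg) (splitR g'G Eg') EX.
Qed.

End Main.

Unset Implicit Arguments.
Local Open Scope group_scope.

Theorem proposition2p4 (gT : finGroupType) (G N : {group gT}) :
  good G -> N <| G -> #|N| = 2 ->
  has_complete_mapping (G / N)%g -> has_complete_mapping G.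
Proof.
move=> gd nNG cN [phi cm].
have sNG := normal_sub nNG; have nG := normal_norm nNG.
have : #|N :\ 1| == 1%N by move: cN; rewrite (cardsD1 1 N) group1 add1n => -[->].
case/cards1P=> z Ez.
have zN : z \in N by have := set11 z; rewrite -Ez => /setD1P [].
have z1 : z != 1 by have := set11 z; rewrite -Ez => /setD1P [].
have Nel : forall n, n \in N -> n = 1 \/ n = z.
  move=> n nN; case: (eqVneq n 1) => [-> | n1]; first by left.
  by right; apply/set1P; rewrite -Ez; apply/setD1P.
have [P sylP] := Sylow_exists 2 G.
have cP : (#|P| = 2 ^ logn 2 #|G|)%N by rewrite (card_Hall sylP) p_part.
have G0 : 0 < #|G| by apply: cardG_gt0.
have dG : 2 %| #|G| by rewrite -cN cardSg.
have k1 : 1 <= logn 2 #|G| by rewrite -(pfactor_dvdn 1 (isT : prime 2) G0) expn1.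
have k2 : 2 <= logn 2 #|G|.
  rewrite ltn_neqAle k1 andbT; apply/eqP => Ek.
  have PS : P \in 'Syl_2(G) by rewrite inE.
  have cP2 : #|P| = 2 by rewrite cP -Ek.
  case: (gd P PS) => [P1 | ].
    by move: cP2; rewrite P1 cards1.
  by rewrite prime_cyclic // cP2.
have d4 : (2 * 2 %| #|G|)%N by move: k2; rewrite -(pfactor_dvdn 2 (isT : prime 2) G0).
have eG : (#|G| = 2 * #|G / N|)%N by rewrite card_quotient // -cN Lagrange.
have dQ : 2 %| #|(G / N)%G| by move: d4; rewrite eG dvdn_pmul2l.
have [h hQ oh] := Cauchy (isT : prime 2) dQ.
have hh : h * h = 1 by move: (expg_order h); rewrite oh expgS expg1.
have h1 : h != 1 by rewrite -order_eq1 oh.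
move: (hQ) => /morphimP [H HN HG Eh].
exists (Phi z h H cm).
exact: (Phi_cm nNG zN z1 Nel cm hQ hh h1 HG (esym Eh)).
Qed.
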